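(* Let $m\in\{1,2\}$, $\gamma\in(1,2]$ and $z\in(z_g,z_M]$. Then the continuation to the right, $C:[V_6,0)\to(0,\infty)$, of the local real-analytic solution through $P_6$ satisfies $C(V)<\sqrt{-V}$ for all $V\in[V_6,0)$; in particular $C(V)\to0$ as $V\to0^-$.
   Context: Fix $m\in\{1,2\}$. For $z>0$ put $\lambda=1+m\gamma z$, $a_1=1+\frac{m(\gamma-1)}{2}$, $a_2=\frac{m(\gamma-1)+mz\gamma(\gamma-3)}{2}$, $a_3=\frac{mz\gamma(\gamma-1)}{2}$, $G(V,C;\gamma,z)=C^2[(m+1)V+2mz]-V(1+V)(\lambda+V)$, $F(V,C;\gamma,z)=C\{C^2[1+\frac{mz}{1+V}]-a_1(1+V)^2+a_2(1+V)-a_3\}$; ODE $\frac{dC}{dV}=\frac FG$. $z_M=(\sqrt\gamma+\sqrt2)^{-2}$; $w(z)=\sqrt{1-2(\gamma+2)z+(\gamma-2)^2z^2}$, $V_6=\frac{-1+(\gamma-2)z-w}{2}$, $C_6=1+V_6$, $P_6=(V_6,C_6)$. The local solution is the real-analytic solution near $V_6$ with $C(V_6)=C_6$ and $C'(V_6)$ equal to the unique negative root of $-G_Cc^2+(F_C-G_V)c+F_V=0$ (partials at $P_6$); it extends as a positive decreasing solution on $[V_6,0)$. $z_g$: value of $z$ with $V_6(z)=\frac{-2(1+m\gamma z)}{\gamma+1+m(\gamma-1)}$ (explicitly $\frac{\sqrt{\gamma^2+(\gamma-1)^2}-\gamma}{\gamma(\gamma-1)}$ for $m=1$, $\frac{\sqrt{(2\gamma^2-\gamma+1)^2+2\gamma(\gamma-1)[4\gamma(\gamma-1)+8/3]}-(2\gamma^2-\gamma+1)}{\gamma[4\gamma(\gamma-1)+8/3]}$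 for $m=2$). *)

(* Defs.v *)
From Stdlib Require Import Reals Lra.
From Coquelicot Require Import Coquelicot.
Open Scope R_scope.

Definition lam (m : nat) (g z : R) : R := 1 + INR m * g * z.
Definition a1 (m : nat) (g : R) : R := 1 + INR m * (g - 1) / 2.
Definition a2 (m : nat) (g z : R) : R :=
  (INR m * (g - 1) + INR m * z * g * (g - 3)) / 2.
Definition a3 (m : nat) (g z : R) : R := INR m * z * g * (g - 1) / 2.

Definition Gf (m : nat) (g z V C : R) : R :=
  C ^ 2 * ((INR m + 1) * V + 2 * INR m * z) - V * (1 + V) * (lam m g z + V).

Definition Ff (m : nat) (g z V C : R) : R :=
  C * (C ^ 2 * (1 + INR m * z / (1 + V)) - a1 m g * (1 + V) ^ 2
       + a2 m g z * (1 + V) - a3 m g z).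

Definition zM (g : R) : R := / (sqrt g + sqrt 2) ^ 2.

Definition wf (g z : R) : R := sqrt (1 - 2 * (g + 2) * z + (g - 2) ^ 2 * z ^ 2).
Definition V6 (g z : R) : R := (-1 + (g - 2) * z - wf g z) / 2.
Definition C6 (g z : R) : R := 1 + V6 g z.

Definition zg (m : nat) (g : R) : R :=
  match m with
  | 1%nat => (sqrt (g ^ 2 + (g - 1) ^ 2) - g) / (g * (g - 1))
  | _ => (sqrt ((2 * g ^ 2 - g + 1) ^ 2
                + 2 * g * (g - 1) * (4 * g * (g - 1) + 8 / 3))
          - (2 * g ^ 2 - g + 1)) / (g * (4 * g * (g - 1) + 8 / 3))
  end.

Definition GV6 (m : nat) (g z : R) : R :=
  Derive (fun V => Gf m g z V (C6 g z)) (V6 g z).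
Definition GC6 (m : nat) (g z : R) : R :=
  Derive (fun C => Gf m g z (V6 g z) C) (C6 g z).
Definition FV6 (m : nat) (g z : R) : R :=
  Derive (fun V => Ff m g z V (C6 g z)) (V6 g z).
Definition FC6 (m : nat) (g z : R) : R :=
  Derive (fun C => Ff m g z (V6 g z) C) (C6 g z).

Definition slope_eq (m : nat) (g z c : R) : Prop :=
  - GC6 m g z * c ^ 2 + (FC6 m g z - GV6 m g z) * c + FV6 m g z = 0.

Definition local_solution (m : nat) (g z : R) (C : R -> R) : Prop :=
  C (V6 g z) = C6 g z /\
  (exists r : R, 0 < r /\ exists a : nat -> R,
     (forall V, Rabs (V - V6 g z) < r -> is_pseries a (V - V6 g z) (C V)) /\
     (forall V, Rabs (V - V6 g z) < r ->
        Gf m g z V (C V) * Derive C V = Ff m g z V (C V))) /\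
  ex_derive C (V6 g z) /\ Derive C (V6 g z) < 0 /\ slope_eq m g z (Derive C (V6 g z)).

Definition right_continuation (m : nat) (g z : R) (C : R -> R) : Prop :=
  local_solution m g z C /\
  (forall V, V6 g z <= V < 0 -> 0 < C V) /\
  (forall V1 V2, V6 g z <= V1 -> V1 < V2 -> V2 < 0 -> C V2 < C V1) /\
  (forall V, V6 g z < V < 0 ->
     Gf m g z V (C V) <> 0 /\
     is_derive C V (Ff m g z V (C V) / Gf m g z V (C V))).

(* Main.v *)
Require Import Defs.
From Stdlib Require Import Reals Lra Psatz Classical.
From Coquelicot Require Import Coquelicot.
Open Scope R_scope.

Lemma sbound (g z c s : R) : 1 < g <= 2 -> 0 < z <= 1/5 -> 0 < c -> c <= (1-(2-g)*z)/2 ->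
  c^2 - (1-(2-g)*z)*c + g*z = 0 -> 0 < s <= c^2 -> s <= 1/4 /\ 4 * s <= 5 * g * z.
Proof. intros. assert (ha: (2-g)*z <= 1/5) by (assert (0 <= 2-g) by lra; nra).
  assert (ha': 0 <= (2-g)*z) by (assert (0 <= 2-g) by lra; nra).
  assert (hb: (1-(2-g)*z) - c >= 2/5) by lra.
  assert (hc: c * (2/5) <= g*z).
  { replace (g*z) with (c * ((1-(2-g)*z) - c)) by nra. nra. }
  assert (c <= 1/2) by lra.
  assert (c^2 <= c/2) by nra.
  split; nra. Qed.

Lemma aux1 (g s : R) : 1 <= g <= 2 -> 0 <= s <= 1/4 ->
  ((2-g)*(1+g*s) + 2*s)/5 < (1-s)^2*(1-g*s).
Proof. intros.
  assert (h1: s*(1-s)^2 <= 9/64) by nra.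
  assert (h2: 0 <= (g-1)*(-s*(1-s)^2 + (1+(g-1)*s)/5)) by (apply Rmult_le_pos; nra).
  assert (h3: (1+3*s)/5 < (1-s)^3) by nra.
  nra. Qed.

Lemma aux2 (g s : R) : 1 <= g <= 2 -> 0 <= s <= 1/4 ->
  (25/144)*(2*(2-g)*(1+g*s)*(1-s) + 4*s) < (1 + s - 2*g*s + (2*g-1)*s^2)*(1-s).
Proof. intros. 
  assert (0 <= (g-1)*(2-g)) by nra.
  assert (0 <= s*(1/4-s)) by nra.
  assert (0 <= s*(g-1)*(2-g)) by (apply Rmult_le_pos; nra).
  assert (0 <= s*s*(g-1)*(2-g)) by (apply Rmult_le_pos; nra).
  assert (0 <= s*(1/4-s)*(g-1)) by (apply Rmult_le_pos; nra).
  assert (0 <= s*(1/4-s)*(2-g)) by (apply Rmult_le_pos; nra).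
  nra. Qed.

Lemma INR_m (m : nat) : (m = 1%nat \/ m = 2%nat) -> INR m = 1 \/ INR m = 2.
Proof. intros [->| ->]; [left|right]; simpl; lra. Qed.

Lemma Pneg (m : nat) (g z s : R) : (m = 1%nat \/ m = 2%nat) -> 1 < g <= 2 -> 0 < z <= 25/144 ->
  0 < s <= 1/4 ->
  (2*s - 2*a1 m g*(1-s)^2 + 2*a2 m g z*(1-s) - 2*a3 m g z -(INR m+1)*s + 2*INR m*z
    + (1-s)*(lam m g z-s))*(1-s) + 2*s*INR m*z < 0.
Proof.
  intros Hm Hg Hz Hs. unfold a1, a2, a3, lam.
  destruct (INR_m m Hm) as [E|E]; rewrite E.
  - set (u := 1 - s). replace s with (1-u) by (unfold u; ring).
    assert (3/4 <= u < 1) by (unfold u; lra). clearbody u.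
    match goal with |- ?L < 0 => replace L with (-u*u*(1-g*(1-u)) + z*(2-g)*(1+g*(1-u))*u + 2*(1-u)*z) by field end.
    assert (hK : 0 <= z*(2-g)*(1+g*(1-u))) by (apply Rmult_le_pos; [apply Rmult_le_pos|]; nra).
    assert (z*(2-g)*(1+g*(1-u))*u <= z*(2-g)*(1+g*(1-u))) by nra.
    pose proof (aux1 g (1-u) ltac:(lra) ltac:(lra)).
    assert (hY : 0 <= (2-g)*(1+g*(1-u)) + 2*(1-u)) by nra.
    assert (z*((2-g)*(1+g*(1-u)) + 2*(1-u)) <= 1/5*((2-g)*(1+g*(1-u)) + 2*(1-u))) by nra.
    replace ((1 - (1 - u)) ^ 2) with (u*u) in H0 by ring.
    assert (z*((2-g)*(1+g*(1-u)) + 2*(1-u)) = z*(2-g)*(1+g*(1-u)) + 2*(1-u)*z) by ring.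
    lra.
  - match goal with |- ?L < 0 => replace L with
      (-(1 + s - 2*g*s + (2*g-1)*s^2)*(1-s) + z*(2*(2-g)*(1+g*s)*(1-s) + 4*s)) by field end.
    pose proof (aux2 g s ltac:(lra) ltac:(lra)).
    assert (hY : 0 <= 2*(2-g)*(1+g*s)*(1-s) + 4*s) by (apply Rplus_le_le_0_compat; [repeat apply Rmult_le_pos|]; nra).
    assert (z*(2*(2-g)*(1+g*s)*(1-s) + 4*s) <= 25/144*(2*(2-g)*(1+g*s)*(1-s) + 4*s)) by nra.
    nra.
Qed.

Lemma core (m : nat) (g z c x Cx : R) : (m = 1%nat \/ m = 2%nat) -> 1 < g <= 2 -> 0 < z <= 25/144 ->
  0 < c -> c <= (1-(2-g)*z)/2 -> c^2 - (1-(2-g)*z)*c + g*z = 0 ->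
  -c^2 <= x < 0 -> Cx^2 = -x ->
  0 < Gf m g z x Cx /\ 2*Cx*Ff m g z x Cx + Gf m g z x Cx < 0.
Proof.
  intros Hm Hg Hz Hc Hc2 Hq Hx HC.
  set (s := -x). assert (Hxs : x = -s) by (unfold s; ring). clearbody s. subst x.
  destruct (sbound g z c s Hg ltac:(lra) Hc Hc2 Hq ltac:(lra)) as [Hs1 Hs2].
  assert (HG : Gf m g z (-s) Cx = s * (-(INR m+1)*s + 2*INR m*z + (1-s)*(lam m g z - s))).
  { unfold Gf. rewrite HC. ring. }
  assert (HQ : 0 < -(INR m+1)*s + 2*INR m*z + (1-s)*(lam m g z - s)).
  { unfold lam. destruct (INR_m m Hm) as [E|E]; rewrite E.
    - assert (0 < g*z) by nra. assert (0 < (1-s)*(1+1*g*z-s)) by nra. nra.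
    - assert (hh := sbound g z c s Hg ltac:(lra) Hc Hc2 Hq ltac:(lra)).
      assert (0 < g*z) by nra. assert (0 <= s*g*z) by nra. nra. }
  split.
  - rewrite HG. apply Rmult_lt_0_compat; lra.
  - replace (2*Cx*Ff m g z (-s) Cx) with (2*Cx^2*(Cx^2*(1+INR m*z/(1+-s)) - a1 m g*(1+-s)^2
        + a2 m g z*(1+-s) - a3 m g z)) by (unfold Ff; ring).
    rewrite HG, HC.
    pose proof (Pneg m g z s Hm Hg Hz ltac:(lra)) as HP.
    match type of HP with ?PP < 0 =>
      replace (2 * (- - s) * (- - s * (1 + INR m * z / (1 + - s)) - a1 m g * (1 + - s) ^ 2 + a2 m g z * (1 + - s) - a3 m g z) +
               s * (- (INR m + 1) * s + 2 * INR m * z + (1 - s) * (lam m g z - s))) with (s * PP / (1-s)) by (field; lra) end.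
    apply Rmult_lt_reg_r with (1-s); [lra|].
    field_simplify; [|lra]. nra.
Qed.

Lemma lt_sqrt_of (a x : R) : 0 <= a -> a^2 < x -> a < sqrt x.
Proof. intros Ha Hx. rewrite <- (sqrt_pow2 a Ha) at 1. apply sqrt_lt_1_alt. split; nra. Qed.
Lemma le_sqrt_of (a x : R) : 0 <= a -> a^2 <= x -> a <= sqrt x.
Proof. intros Ha Hx. rewrite <- (sqrt_pow2 a Ha) at 1. apply sqrt_le_1_alt. lra. Qed.

Lemma zg_pos (m : nat) (g : R) : (m = 1%nat \/ m = 2%nat) -> 1 < g <= 2 -> 0 <= zg m g.
Proof.
  intros [-> | ->] Hg; unfold zg.
  - assert (g < sqrt (g ^ 2 + (g - 1) ^ 2)) by (apply lt_sqrt_of; nra).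
    apply Rlt_le, Rdiv_lt_0_compat; nra.
  - assert (2 * g ^ 2 - g + 1 < sqrt ((2 * g ^ 2 - g + 1) ^ 2 + 2 * g * (g - 1) * (4 * g * (g - 1) + 8 / 3))).
    { apply lt_sqrt_of. nra. assert (0 < 2*g*(g-1)) by nra. assert (0 < 4 * g * (g - 1) + 8 / 3) by nra. nra. }
    apply Rlt_le, Rdiv_lt_0_compat; [lra|]. assert (0 < 4 * g * (g - 1) + 8 / 3) by nra. nra.
Qed.

Lemma zM_bound (g : R) : 1 < g -> zM g <= 25/144.
Proof.
  intros Hg. unfold zM.
  assert (1 <= sqrt g) by (apply le_sqrt_of; lra).
  assert (7/5 <= sqrt 2) by (apply le_sqrt_of; lra).
  replace (25/144) with (/ (12/5)^2) by field.
  apply Rinv_le_contravar; [nra|]. nra.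
Qed.

Lemma D_nonneg (g z : R) : 1 < g -> 0 < z -> z <= zM g -> 0 <= 1 - 2*(g+2)*z + (g-2)^2*z^2.
Proof.
  intros Hg Hz HzM. unfold zM in HzM.
  set (t := sqrt g). set (r := sqrt 2).
  assert (Ht : t^2 = g) by (apply pow2_sqrt; lra).
  assert (Hr : r^2 = 2) by (apply pow2_sqrt; lra).
  assert (Ht0 : 1 <= t) by (apply le_sqrt_of; lra).
  assert (Hr0 : 1 <= r) by (apply le_sqrt_of; lra).
  fold t r in HzM. set (u := z*(t+r)^2).
  assert (Hu : u <= 1).
  { unfold u. apply Rmult_le_compat_r with (r := (t+r)^2) in HzM; [|nra].
    rewrite Rinv_l in HzM; nra. }
  assert (Hu0 : 0 <= u) by (unfold u; apply Rmult_le_pos; [lra| apply pow2_ge_0]).  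
  assert (Eq : (1 - 2*(g+2)*z + (g-2)^2*z^2) * (t+r)^2 = (1-u)*((t+r)^2 - (t-r)^2*u)).
  { rewrite <- Ht. replace (t^2+2) with (t^2+r^2) by lra. replace (t^2-2) with (t^2-r^2) by lra.
    unfold u. ring. }
  assert (0 <= (1-u)*((t+r)^2 - (t-r)^2*u)).
  { apply Rmult_le_pos; [lra|]. assert ((t-r)^2*u <= (t-r)^2*1) by (apply Rmult_le_compat_l; [apply pow2_ge_0|lra]). assert (0 <= t*r) by nra. nra. }
  assert (0 < (t+r)^2) by nra.
  nra.
Qed.
Lemma cont_eps (f : R -> R) x : continuity_pt f x -> forall eps, 0 < eps ->
  exists d, 0 < d /\ forall y, Rabs (y - x) < d -> Rabs (f y - f x) < eps.
Proof.
  intros H eps Heps. destruct (H eps Heps) as [d [Hd H']].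
  exists d; split; auto. intros y Hy.
  destruct (Req_dec y x) as [->|Hne].
  - unfold Rminus; rewrite Rplus_opp_r, Rabs_R0; lra.
  - apply (H' y). split; [split; [exact I| auto]| exact Hy].
Qed.

Lemma first_touch (h : R -> R) (a b : R) : a < b -> h a < 0 -> 0 <= h b ->
  (forall x, a <= x <= b -> continuity_pt h x) ->
  exists c, a <= c <= b /\ h c = 0 /\ (forall d, 0 < d -> exists e, c - d < e < c /\ h e < 0).
Proof.
  intros Hab Ha Hb Hc.
  set (E := fun x => a <= x <= b /\ h x < 0).
  assert (HB : bound E) by (exists b; intros x [Hx _]; lra).
  assert (HE : exists x, E x) by (exists a; split; [lra|auto]).
  destruct (completeness E HB HE) as [c [Hub Hlub]].
  assert (Hac : a <= c) by (apply Hub; split; [lra|auto]).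
  assert (Hcb : c <= b) by (apply Hlub; intros x [Hx _]; lra).
  assert (Happ : forall d, 0 < d -> exists e, c - d < e <= c /\ E e).
  { intros d Hd. destruct (classic (exists e, c - d < e <= c /\ E e)) as [H|H]; auto.
    exfalso. assert (c <= c - d); [|lra]. apply Hlub. intros x Hx.
    destruct (Rle_dec x (c - d)) as [|Hn]; auto. exfalso; apply H. exists x.
    split; [split; [lra| apply Hub; auto]| auto]. }
  assert (Hle : h c <= 0).
  { destruct (Rle_dec (h c) 0) as [|Hn]; auto. exfalso.
    destruct (cont_eps h c (Hc c (conj Hac Hcb)) (h c) ltac:(lra)) as [d [Hd Hd']].
    destruct (Happ d Hd) as [e [He [_ He2]]].
    assert (Rabs (h e - h c) < h c) by (apply Hd'; rewrite Rabs_left1; lra).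
    rewrite Rabs_left1 in H; lra. }
  assert (Hge : 0 <= h c).
  { destruct (Rle_dec 0 (h c)) as [|Hn]; auto. exfalso.
    destruct (Req_dec c b) as [->|Hne]; [lra|].
    destruct (cont_eps h c (Hc c (conj Hac Hcb)) (- h c) ltac:(lra)) as [d [Hd Hd']].
    set (x := Rmin (c + d/2) b).
    assert (Hx1 : c < x) by (unfold x; apply Rmin_glb_lt; lra).
    assert (Hx2 : x <= c + d/2) by (unfold x; apply Rmin_l).
    assert (Hx3 : x <= b) by (unfold x; apply Rmin_r).
    assert (Rabs (h x - h c) < - h c) by (apply Hd'; rewrite Rabs_right; lra).
    assert (E x).
    { split; [lra|]. apply Rabs_def2 in H. lra. }
    assert (x <= c) by (apply Hub; auto). lra. }
  exists c. split; [lra|]. split; [lra|].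
  intros d Hd. destruct (Happ d Hd) as [e [He [_ He2]]].
  exists e. split; [|auto]. split; [lra|].
  destruct (Req_dec e c) as [->|]; [lra|lra].
Qed.

Lemma deriv_contra (h : R -> R) (c l : R) : derivable_pt_lim h c l -> l < 0 -> h c = 0 ->
  (forall d, 0 < d -> exists e, c - d < e < c /\ h e < 0) -> False.
Proof.
  intros Hd Hl Hc Happ.
  destruct (Hd (- l / 2) ltac:(lra)) as [del Hdel].
  destruct (Happ del (cond_pos del)) as [e [[He1 He2] He3]].
  assert (Hne : e - c <> 0) by lra.
  assert (Hab : Rabs (e - c) < del) by (rewrite Rabs_left; lra).
  specialize (Hdel (e - c) Hne Hab).
  replace (c + (e - c)) with e in Hdel by ring. rewrite Hc in Hdel.
  apply Rabs_def2 in Hdel. destruct Hdel as [H1 H2].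
  assert (0 < h e / (e - c)).
  { replace (h e / (e - c)) with ((- h e) / (c - e)) by (field; lra).
    apply Rdiv_lt_0_compat; lra. }
  lra.
Qed.
Lemma dh (C : R -> R) x l : is_derive C x l -> derivable_pt_lim (fun V => C V ^ 2 + V) x (2 * C x * l + 1).
Proof.
  intros H. apply is_derive_Reals.
  assert (H1 := is_derive_pow C 2 x l H).
  assert (H2 := is_derive_plus _ _ x _ _ H1 (is_derive_id x)).
  replace (2 * C x * l + 1) with (plus (INR 2 * l * C x ^ Init.Nat.pred 2) one).
  exact H2. simpl. unfold plus, one; simpl. ring.
Qed.
Lemma ball_R (x e y : R) : ball x e y -> Rabs (y - x) < e.
Proof. intros H. exact H. Qed.
Lemma ball_R' (x e y : R) : Rabs (y - x) < e -> ball x e y.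
Proof. intros H. exact H. Qed.

Theorem mainTheorem17 (m : nat) (g z : R) (C : R -> R) :
  (m = 1%nat \/ m = 2%nat) ->
  1 < g <= 2 ->
  zg m g < z <= zM g ->
  right_continuation m g z C ->
  (forall V, V6 g z <= V < 0 -> C V < sqrt (- V)) /\
  filterlim C (at_left 0) (locally 0).
Proof.
  intros Hm Hg [Hz1 Hz2] [Hloc [Hpos [Hdec Hder]]].
  assert (Hz0 : 0 < z) by (pose proof (zg_pos m g Hm Hg); lra).
  assert (HzB : z <= 25/144) by (pose proof (zM_bound g ltac:(lra)); lra).
  pose proof (D_nonneg g z ltac:(lra) Hz0 Hz2) as HD.
  assert (Hw2 : wf g z ^ 2 = 1 - 2*(g+2)*z + (g-2)^2*z^2) by (unfold wf; apply pow2_sqrt; auto).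
  assert (Hw0 : 0 <= wf g z) by (unfold wf; apply sqrt_pos).
  set (w := wf g z) in *.
  assert (HV6 : V6 g z = (-1 + (g-2)*z - w)/2) by reflexivity.
  set (c := C6 g z).
  assert (Hcdef : c = (1 + (g-2)*z - w)/2) by (unfold c, C6; rewrite HV6; field).
  assert (HV6c : V6 g z = c - 1) by (rewrite HV6, Hcdef; field).
  assert (Hc2 : c <= (1-(2-g)*z)/2) by lra.
  assert (Hc12 : c <= 1/2) by (assert (0 <= (2-g)*z) by nra; lra).
  assert (Hq : c^2 - (1-(2-g)*z)*c + g*z = 0).
  { transitivity ((w^2 - (1-(2-g)*z)^2)/4 + g*z); [rewrite Hcdef; field|].
    rewrite Hw2. field. }
  destruct Hloc as [HC6' _].
  assert (HC6 : C (c-1) = c) by (rewrite <- HV6c; exact HC6'). clear HC6'.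
  rewrite HV6c in Hpos, Hdec, Hder.
  assert (Hc0 : 0 < c) by (rewrite <- HC6; apply Hpos; lra).
  assert (HV0 : c - 1 < - c^2) by nra.
  assert (Hbar : forall V1, - c^2 < V1 < 0 -> C V1 ^ 2 + V1 < 0).
  { intros V1 HV1. destruct (Rlt_le_dec (C V1 ^ 2 + V1) 0) as [|Hge]; auto. exfalso.
    set (h := fun V => C V ^ 2 + V).
    assert (Hdh : forall x, c - 1 < x < 0 ->
      derivable_pt_lim h x (2 * C x * (Ff m g z x (C x) / Gf m g z x (C x)) + 1)).
    { intros x Hx. apply dh. apply Hder. lra. }
    assert (Hh0 : h (- c^2) < 0).
    { unfold h. assert (Hlt1 : C (-c^2) < C (c-1)) by (apply Hdec; lra).
      assert (0 < C (-c^2)) by (apply Hpos; lra). rewrite HC6 in Hlt1. nra. }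
    destruct (first_touch h (-c^2) V1 ltac:(lra) Hh0 Hge) as [ct [Hct [Hhct Happ]]].
    { intros x Hx. apply derivable_continuous_pt.
      exists (2 * C x * (Ff m g z x (C x) / Gf m g z x (C x)) + 1). apply Hdh. lra. }
    assert (HCt : C ct ^ 2 = - ct) by (unfold h in Hhct; lra).
    assert (HCt0 : 0 < C ct) by (apply Hpos; lra).
    destruct (core m g z c ct (C ct) Hm Hg ltac:(lra) Hc0 Hc2 Hq ltac:(lra) HCt) as [HG HF].
    apply (deriv_contra h ct _ (Hdh ct ltac:(lra))); auto.
    replace (2 * C ct * (Ff m g z ct (C ct) / Gf m g z ct (C ct)) + 1)
      with ((2 * C ct * Ff m g z ct (C ct) + Gf m g z ct (C ct)) / Gf m g z ct (C ct)) by (field; lra).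
    replace ((2 * C ct * Ff m g z ct (C ct) + Gf m g z ct (C ct)) / Gf m g z ct (C ct))
      with (- ((- (2 * C ct * Ff m g z ct (C ct) + Gf m g z ct (C ct))) / Gf m g z ct (C ct))) by (field; lra).
    assert (0 < (- (2 * C ct * Ff m g z ct (C ct) + Gf m g z ct (C ct))) / Gf m g z ct (C ct))
      by (apply Rdiv_lt_0_compat; lra).
    lra. }
  assert (Hmain : forall V, c - 1 <= V < 0 -> C V < sqrt (- V)).
  { intros V HV. destruct (Rle_lt_dec V (- c^2)) as [Hle|Hlt].
    - destruct (Req_dec V (c-1)) as [->|Hne].
      + rewrite HC6. apply lt_sqrt_of; lra.
      + assert (C V < C (c-1)) by (apply Hdec; lra). rewrite HC6 in H.
        assert (c <= sqrt (- V)) by (apply le_sqrt_of; lra). lra.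
    - assert (C V ^ 2 + V < 0) by (apply Hbar; lra).
      assert (0 < C V) by (apply Hpos; lra).
      apply lt_sqrt_of; lra. }
  split; [rewrite HV6c; exact Hmain|].
  apply filterlim_locally. intros eps.
  assert (Hd : 0 < Rmin (eps^2) (1 - c)).
  { apply Rmin_glb_lt; [|lra]. pose proof (cond_pos eps). nra. }
  exists (mkposreal _ Hd). intros y Hy Hy0.
  apply ball_R in Hy. cbn [pos] in Hy. rewrite Rminus_0_r, Rabs_left in Hy by lra.
  assert (Hy1 : - y < eps^2) by (pose proof (Rmin_l (eps^2) (1-c)); lra).
  assert (Hy2 : - y < 1 - c) by (pose proof (Rmin_r (eps^2) (1-c)); lra).
  apply ball_R'. rewrite Rminus_0_r.
  assert (0 < C y) by (apply Hpos; lra).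
  assert (C y < sqrt (- y)) by (apply Hmain; lra).
  assert (sqrt (- y) < eps).
  { rewrite <- (sqrt_pow2 eps) by (pose proof (cond_pos eps); lra). apply sqrt_lt_1_alt. lra. }
  rewrite Rabs_right; lra.
Qed.
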